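(* Let $G$ be a finite group that is not of prime power order, and suppose there exists an element $x\in G$ of prime order $p$ such that the centralizer $C_G(x)$ is a $p$-group. Then the cyclic graph $\Delta(G)$ is disconnected.
   Context: For a finite group $G$, the cyclic graph $\Delta(G)$ has vertex set $G^{\#}=G\setminus\{1\}$, and distinct vertices $x,y$ are adjacent if and only if the subgroup $\langle x,y\rangle$ is cyclic. *)

(* Defs.v *)
From mathcomp Require Import all_boot all_fingroup all_solvable.
Set Implicit Arguments. Unset Strict Implicit. Unset Printing Implicit Defensive.
Local Open Scope group_scope.

Definition cyc_adj (gT : finGroupType) (G : {set gT}) : rel gT :=
  fun x y => [&& x \in G^#, y \in G^#, x != y & cyclic <<[set x; y]>>].

(* Delta(G) is connected: any two vertices are joined by a path in Delta(G).
   (Since cyc_adj only relates vertices, paths stay inside G^#.) *)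
Definition cyc_graph_connected (gT : finGroupType) (G : {set gT}) : Prop :=
  forall x y, x \in G^# -> y \in G^# -> connect (cyc_adj G) x y.

(* Main.v *)
Require Import Defs.
From mathcomp Require Import all_boot all_fingroup all_solvable.
Local Open Scope group_scope.

Lemma step (gT : finGroupType) (G : {group gT}) (x : gT) (p : nat) :
  prime p -> #[x] = p -> p.-group 'C_G[x] ->
  forall y z, x \in <[y]> -> y \in 'C_G[x] -> cyc_adj G y z ->
  x \in <[z]> /\ z \in 'C_G[x].
Proof.
move=> pp ox pC y z xy yC /and4P [_ zG _ cH].
set H := <<[set y; z]>>.
have yH : y \in H by apply: mem_gen; rewrite !inE eqxx.
have zH : z \in H by apply: mem_gen; rewrite !inE eqxx orbT.
have xH : x \in H by apply: (subsetP _ x xy); rewrite cycle_subG.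
have abH := cyclic_abelian cH.
have zCx : z \in 'C[x].
  apply/cent1P; have := subsetP abH z zH => /centP/(_ x xH) c; by rewrite /commute c.
have zC : z \in 'C_G[x] by rewrite inE zCx andbT; case/setD1P: zG.
have HC : H \subset 'C_G[x].
  by rewrite gen_subG subUset !sub1set yC zC.
have pH : p.-group H := pgroupS HC pC.
have zsH : <[z]> \subset H by rewrite cycle_subG.
have pz : p.-group <[z]> := pgroupS zsH pH.
have z1 : z != 1 by case/setD1P: zG.
have nz1 : <[z]> != 1 by rewrite cycle_eq1.
have [_ pdz _] := pgroup_pdiv pz nz1.
have [w wz ow] := Cauchy pp pdz.
have wH : <[w]> \subset H by apply: subset_trans zsH; rewrite cycle_subG.
have xsH : <[x]> \subset H by rewrite cycle_subG.
have /eqP ewx : <[w]> == <[x]> :> {set gT}.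
  by rewrite (eq_subG_cyclic cH wH xsH) -/(order w) -/(order x) ow ox.
split=> //.
have : x \in <[w]> by rewrite ewx cycle_id.
by apply: (subsetP _ x); rewrite cycle_subG.
Qed.

Theorem lemma3p3 (gT : finGroupType) (G : {group gT}) :
  ~ (exists p : nat, prime p /\ p.-group G) ->
  (exists (x : gT) (p : nat),
      [/\ x \in G, prime p, #[x] = p & p.-group 'C_G[x]]) ->
  ~ cyc_graph_connected G.
Proof.
move=> npg [x [p [xG pp ox pC]]] conn.
have x1 : x != 1 by rewrite -order_gt1 ox prime_gt1.
have : ~~ p.-group G by apply/negP => pG; apply: npg; exists p.
rewrite /pgroup /pnat cardG_gt0 /= => /allPn [q qpr qp].
have qprime : prime q by move: qpr; rewrite mem_primes => /andP[].
have qd : q %| #|G| by move: qpr; rewrite mem_primes => /and3P[].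
have [y yG oy] := Cauchy qprime qd.
have y1 : y != 1 by rewrite -order_gt1 oy prime_gt1.
have xG1 : x \in G^# by rewrite !inE x1.
have yG1 : y \in G^# by rewrite !inE y1.
have /connectP [s ps ely] := conn x y xG1 yG1.
have inv : forall s a, x \in <[a]> -> a \in 'C_G[x] -> path (cyc_adj G) a s ->
    x \in <[last a s]> /\ last a s \in 'C_G[x].
  elim=> [|b s' IH] a xa aC //= /andP [ab ps'].
  have [xb bC] := @step _ G x p pp ox pC a b xa aC ab.
  exact: IH xb bC ps'.
have xC : x \in 'C_G[x] by rewrite inE xG cent1id.
have [_ yC] := inv s x (cycle_id x) xC ps.
rewrite -ely in yC.
have yc : <[y]> \subset 'C_G[x] by rewrite cycle_subG.
have py := pgroupS yc pC.
have ny1 : <[y]> != 1 by rewrite cycle_eq1.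
have [_ pdy _] := pgroup_pdiv py ny1.
move: pdy; rewrite -/(order y) oy dvdn_prime2 // => /eqP epq.
by move: qp; rewrite epq inE eqxx.
Qed.
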